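(* Let $(P,A,\lambda)$ be a marked poset and let $(U_1,U_2)$ and $(V_1,V_2)$ be two different admissible decompositions of it. If $U_1\cap\operatorname{St}(P)=V_1\cap\operatorname{St}(P)$, then the marked chain-order polytopes $\mathcal{CO}_{U_1,U_2}(\lambda)$ and $\mathcal{CO}_{V_1,V_2}(\lambda)$ are unimodular equivalent.
   Context: A marked poset is a triple $(P,A,\lambda)$ where $(P,\prec)$ is a finite poset, $A\subseteq P$ contains all minimal and all maximal elements of $P$, and $\lambda:A\to\mathbb{Z}_{\ge 0}$, $a\mapsto\lambda_a$. For $p,q\in P$ write $q\to p$ (''$p$ covers $q$'') if $q\prec p$ and there is no $r$ with $q\prec r\prec p$. Let $p\to$ denote the set of elements covering $p$, and $\rightsquigarrow p$ the set of maximal chains ending in $p$, i.e. chains $r_0\to r_1\to\cdots\to r_k=p$ with $r_0$ minimal in $P$. An element $p\in P$ is a star element if $|p\to|\ge 2$ and $|\rightsquigarrow p|\ge 2$; $\operatorname{St}(P)$ is the set of star elements. A decomposition of $(P,A,\lambda)$ is a pair $(U_1,U_2)$ of disjoint sets with $U_1\cup U_2=P\setminus A$; it is admissible if there are no $u_1\in U_1$, $u_2\in U_2$ with $u_1\prec u_2$. Put $A_1=A\cup U_1$. The marked chain-order polytope $\mathcal{CO}_{U_1,U_2}(\lambda)\subset\mathbb{R}^{P\setminus A}$ is the set of $(x_p)_{p\in P\setminus A}$ such that: (i) $x_p\le\lambda_a$ whenever $p\in U_1$, $a\in A$, $p\prec a$; (ii) $\lambda_b\le x_q$ whenever $q\in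 U_1$, $b\in A$, $b\prec q$; (iii) $x_p\le x_q$ whenever $p,q\in U_1$, $p\prec q$; (iv) $x_p\ge0$ for $p\in U_2$; (v) for every chain $b\prec p_n\prec\cdots\prec p_1\prec a$ with $n\ge1$, $a,b\in A_1$, $p_i\in U_2$: $x_{p_1}+\cdots+x_{p_n}\le\lambda_a-\lambda_b$, where $\lambda_q$ means $x_q$ for $q\in U_1$; (vi) for every chain $p_1\prec\cdots\prec p_s\prec q$ with $q\in U_1$, $p_i\in U_2$: $x_{p_1}+\cdots+x_{p_s}\le x_q$. *)

(* Defs.v *)
From HB Require Import structures.
From mathcomp Require Import all_boot all_order all_algebra.
From mathcomp Require Import reals.
Set Implicit Arguments. Unset Strict Implicit. Unset Printing Implicit Defensive.
Import Order.TTheory GRing.Theory Num.Theory.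

Section MarkedPoset.
Variables (d : Order.disp_t) (T : finPOrderType d).

Local Open Scope order_scope.

Definition covers (q p : T) : bool :=
  (q < p) && [forall r : T, ~~ ((q < r) && (r < p))].

Definition minimal (p : T) : bool := [forall q : T, ~~ (q < p)].
Definition maximal (p : T) : bool := [forall q : T, ~~ (p < q)].

Definition up_covers (p : T) : {set T} := [set q | covers p q].

Definition max_chain_to (p : T) (s : seq T) : Prop :=
  match s with
  | [::] => False
  | r0 :: rest => [/\ minimal r0, path covers r0 rest & last r0 rest = p]
  end.

(* p is a star element: |p ->| >= 2 and |~> p| >= 2 *)
Definition star_elem (p : T) : Prop :=
  (2 <= #|up_covers p|)%N /\
  exists s1 s2 : seq T, [/\ s1 <> s2, max_chain_to p s1 & max_chain_to p s2].

Definition marked_poset (A : {set T}) : Prop :=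
  forall p : T, (minimal p || maximal p) -> p \in A.

Definition decomposition (A U1 U2 : {set T}) : Prop :=
  [disjoint U1 & U2] /\ U1 :|: U2 = ~: A.

Definition admissible (U1 U2 : {set T}) : Prop :=
  forall u1 u2 : T, u1 \in U1 -> u2 \in U2 -> ~ (u1 < u2).

Definition coord (A : {set T}) := {p : T | p \notin A}.

End MarkedPoset.

Section Polytope.
Variables (R : realType) (d : Order.disp_t) (T : finPOrderType d).
Variables (A : {set T}) (lam : T -> nat).

Local Open Scope ring_scope.

Definition ext (x : coord A -> R) (q : T) : R :=
  match insub q with
  | Some s => x s
  | None => (lam q)%:R
  end.

Definition chain_order_polytope (U1 U2 : {set T}) (x : coord A -> R) : Prop :=
  [/\
      (forall (p a : T), p \in U1 -> a \in A -> (p < a)%O -> ext x p <= (lam a)%:R),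
      (forall (q b : T), q \in U1 -> b \in A -> (b < q)%O -> (lam b)%:R <= ext x q),
      (forall (p q : T), p \in U1 -> q \in U1 -> (p < q)%O -> ext x p <= ext x q),
      (forall p : T, p \in U2 -> 0 <= ext x p) &
      (forall (a b : T) (ps : seq T), a \in A :|: U1 -> b \in A :|: U1 ->
         ps != [::] -> all (fun p => p \in U2) ps ->
         sorted (fun u v => (u < v)%O) (b :: rcons ps a) ->
         \sum_(p <- ps) ext x p <= ext x a - ext x b)] /\
      (forall (q : T) (ps : seq T), q \in U1 ->
         ps != [::] -> all (fun p => p \in U2) ps ->
         sorted (fun u v => (u < v)%O) (rcons ps q) ->
         \sum_(p <- ps) ext x p <= ext x q).

Definition unimodular_equiv (Q1 Q2 : (coord A -> R) -> Prop) : Prop :=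
  exists (M N : coord A -> coord A -> int) (b : coord A -> int),
    [/\ (forall i j, \sum_k M i k * N k j = (i == j)%:Z),
        (forall i j, \sum_k N i k * M k j = (i == j)%:Z)
      & (forall y : coord A -> R,
           Q2 y <-> exists x : coord A -> R,
             Q1 x /\ forall i, y i = \sum_j (M i j)%:~R * x j + (b i)%:~R)].

End Polytope.

(* Main.v *)
Require Import Defs.
From HB Require Import structures.
From mathcomp Require Import all_boot all_order all_algebra.
From mathcomp Require Import reals.
From mathcomp Require Import lra.
From Stdlib Require Import FunctionalExtensionality.
Set Implicit Arguments. Unset Strict Implicit. Unset Printing Implicit Defensive.
Import Order.TTheory GRing.Theory Num.Theory.

Section Unimod.
Variables (R : realType) (d : Order.disp_t) (T : finPOrderType d) (A : {set T}).
Local Open Scope ring_scope.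
Notation C := (Defs.coord A).
Notation UE := (@unimodular_equiv R d T A).
Implicit Types (M N : C -> C -> int) (b : C -> int) (x y : C -> R).

Definition aff M b x : C -> R := fun i => \sum_j (M i j)%:~R * x j + (b i)%:~R.
Definition mmul M N : C -> C -> int := fun i j => \sum_k M i k * N k j.
Definition inv2 M N := (forall i j, \sum_k M i k * N k j = (i == j)%:Z).

Lemma aff_comp M1 b1 M2 b2 x :
  aff M2 b2 (aff M1 b1 x) = aff (mmul M2 M1) (fun i => \sum_k M2 i k * b1 k + b2 i) x.
Proof.
apply: functional_extensionality => i; rewrite /aff /mmul.
rewrite rmorphD /= addrA; congr (_ + _).
under eq_bigr => k _ do rewrite mulrDr mulr_sumr.
rewrite big_split /= rmorph_sum; congr (_ + _).
  rewrite exchange_big /=; apply: eq_bigr => j _.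
  rewrite rmorph_sum mulr_suml; apply: eq_bigr => k _.
  by rewrite mulrA rmorphM.
by apply: eq_bigr => k _; rewrite rmorphM.
Qed.

Lemma aff_id x : aff (fun i j => (i == j)%:Z) (fun=> 0) x = x.
Proof.
apply: functional_extensionality => i; rewrite /aff addr0.
rewrite (bigD1 i) //= eqxx mul1r big1 ?addr0 // => j /negbTE ji.
by rewrite eq_sym ji mul0r.
Qed.

Lemma aff_inv M N b x : inv2 N M ->
  aff N (fun i => - \sum_k N i k * b k) (aff M b x) = x.
Proof.
move=> hNM; rewrite aff_comp.
have -> : (fun i => \sum_k N i k * b k + - (\sum_k N i k * b k)) = (fun=> 0).
  by apply: functional_extensionality => i; rewrite subrr.
have -> : mmul N M = (fun i j => (i == j)%:Z).
  by apply: functional_extensionality => i; apply: functional_extensionality => j; rewrite /mmul hNM.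
exact: aff_id.
Qed.

Lemma mmul_inv M N : inv2 M N -> mmul M N = (fun i j => (i == j)%:Z).
Proof.
by move=> h; apply: functional_extensionality => i; apply: functional_extensionality => j; rewrite /mmul h.
Qed.

Lemma aff_inv' M N b y : inv2 M N ->
  aff M b (aff N (fun i => - \sum_k N i k * b k) y) = y.
Proof.
move=> hMN; rewrite aff_comp mmul_inv //.
have -> : (fun i => \sum_k M i k * - (\sum_k0 N k k0 * b k0) + b i) = (fun=> 0).
  apply: functional_extensionality => i.
  under eq_bigr => k _ do rewrite mulrN mulr_sumr.
  rewrite sumrN exchange_big /=.
  under eq_bigr => l _ do under eq_bigr => k _ do rewrite mulrA.
  under eq_bigr => l _ do rewrite -mulr_suml hMN.
  rewrite (bigD1 i) //= eqxx mul1r big1 ?addr0 ?addNr // => l /negbTE li.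
  by rewrite eq_sym li mul0r.
exact: aff_id.
Qed.

Lemma aff_inj M N b x x' : inv2 N M -> aff M b x = aff M b x' -> x = x'.
Proof.
move=> hNM e.
by rewrite -(aff_inv b x hNM) -(aff_inv b x' hNM) e.
Qed.

Lemma ue_of (Q1 Q2 : (C -> R) -> Prop) M N b :
  inv2 M N -> inv2 N M -> (forall x, Q1 x <-> Q2 (aff M b x)) ->
  UE Q1 Q2.
Proof.
move=> hMN hNM hQ; exists M, N, b; split => // y; split.
  move=> Q2y; exists (aff N (fun i => - \sum_k N i k * b k) y); split.
    by apply/hQ; rewrite aff_inv'.
  by move=> i; rewrite -[in LHS](aff_inv' b y hMN).
by case=> x [/hQ Q1x ey]; have -> : y = aff M b x by apply: functional_extensionality.
Qed.

Lemma ue_refl Q : UE Q Q.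
Proof.
apply: (@ue_of _ _ (fun i j => (i == j)%:Z) (fun i j => (i == j)%:Z) (fun=> 0)).
- move=> i j; rewrite (bigD1 i) //= eqxx mul1r big1 ?addr0 // => k /negbTE ki.
  by rewrite eq_sym ki mul0r.
- move=> i j; rewrite (bigD1 i) //= eqxx mul1r big1 ?addr0 // => k /negbTE ki.
  by rewrite eq_sym ki mul0r.
by move=> x; rewrite aff_id.
Qed.

Lemma ue_sym Q1 Q2 : UE Q1 Q2 -> UE Q2 Q1.
Proof.
case=> M [N [b [hMN hNM hQ]]].
apply: (@ue_of _ _ N M (fun i => - \sum_k N i k * b k)) => // y; split.
  move=> /hQ [x [Q1x ey]].
  have -> : y = aff M b x by apply: functional_extensionality.
  by rewrite aff_inv.
move=> Q1x; apply/hQ; exists (aff N (fun i => - \sum_k N i k * b k) y); split => //.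
by move=> i; rewrite -[in LHS](aff_inv' b y hMN).
Qed.

Lemma inv2_comp M1 N1 M2 N2 : inv2 M1 N1 -> inv2 M2 N2 ->
  inv2 (mmul M2 M1) (mmul N1 N2).
Proof.
move=> h1 h2 i j; rewrite /mmul.
under eq_bigr => k _ do rewrite mulr_suml.
rewrite exchange_big /=.
under eq_bigr => l _ do under eq_bigr => k _ do rewrite -mulrA.
under eq_bigr => l _ do rewrite -mulr_sumr.
have -> : \sum_l M2 i l * (\sum_k M1 l k * (\sum_k0 N1 k k0 * N2 k0 j))
   = \sum_l M2 i l * N2 l j.
  apply: eq_bigr => l _; under eq_bigr => k _ do rewrite mulr_sumr.
  rewrite exchange_big /=.
  under eq_bigr => m _ do under eq_bigr => k _ do rewrite mulrA.
  under eq_bigr => m _ do rewrite -mulr_suml h1.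
  rewrite (bigD1 l) //= eqxx mul1r big1 ?addr0 // => m /negbTE ml.
  by rewrite eq_sym ml mul0r.
exact: h2.
Qed.

Lemma ue_trans Q1 Q2 Q3 : UE Q1 Q2 -> UE Q2 Q3 ->
  UE Q1 Q3.
Proof.
case=> M1 [N1 [b1 [h1 h1' hQ1]]]; case=> M2 [N2 [b2 [h2 h2' hQ2]]].
apply: (@ue_of _ _ (mmul M2 M1) (mmul N1 N2) (fun i => \sum_k M2 i k * b1 k + b2 i)).
- exact: inv2_comp.
- exact: inv2_comp.
move=> x; rewrite -aff_comp; split.
  move=> Q1x; apply/hQ2; exists (aff M1 b1 x); split => //.
  by apply/hQ1; exists x.
move=> /hQ2 [y [Q2y ey]].
have ey' : aff M2 b2 (aff M1 b1 x) = aff M2 b2 y by apply: functional_extensionality.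
have {ey'} ey := aff_inj h2' ey'.
move: Q2y => /hQ1 [x' [Q1x' ex']].
have ex'' : aff M1 b1 x' = aff M1 b1 x by rewrite ey; apply: functional_extensionality.
by rewrite -(aff_inj h1' ex'').
Qed.

End Unimod.
Section Elem.
Variables (R : realType) (d : Order.disp_t) (T : finPOrderType d) (A : {set T}).
Local Open Scope ring_scope.
Notation C := (Defs.coord A).
Notation UE := (@unimodular_equiv R d T A).
Variables (p0 : C) (s : int) (w : C -> int) (beta : int).
Hypothesis hs : s * s = 1.
Hypothesis hw : w p0 = 0.

Definition eM : C -> C -> int := fun i j =>
  if i == p0 then (if j == p0 then s else w j) else (i == j)%:Z.
Definition eN : C -> C -> int := fun i j =>
  if i == p0 then (if j == p0 then s else - (s * w j)) else (i == j)%:Z.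
Definition eb : C -> int := fun i => if i == p0 then beta else 0.

Lemma sum_delta_off (f : C -> int) j :
  \sum_(k | k != p0) f k * (k == j)%:Z = if j == p0 then 0 else f j.
Proof.
case: eqP => [->|/eqP jp].
  by rewrite big1 // => k kp; rewrite (negbTE kp) mulr0.
rewrite (bigD1 j) //= eqxx mulr1 big1 ?addr0 // => k /andP[_ /negbTE ->].
by rewrite mulr0.
Qed.

Lemma sum_delta_l (f : C -> int) i : \sum_k (i == k)%:Z * f k = f i.
Proof.
rewrite (bigD1 i) //= eqxx mul1r big1 ?addr0 // => k /negbTE ki.
by rewrite eq_sym ki mul0r.
Qed.

Lemma eMN : inv2 eM eN.
Proof.
move=> i j; rewrite /eM; case: (eqVneq i p0) => [->|ip].
  rewrite (bigD1 p0) //= eqxx.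
  under eq_bigr => k kp do rewrite (negbTE kp) /eN (negbTE kp).
  rewrite sum_delta_off /eN eqxx; case: (eqVneq j p0) => [jp|jp].
    by rewrite hs addr0.
  by rewrite mulrN mulrA hs mul1r addNr.
by rewrite (sum_delta_l (fun k => eN k j)) /eN (negbTE ip).
Qed.

Lemma eNM : inv2 eN eM.
Proof.
move=> i j; rewrite /eN; case: (eqVneq i p0) => [->|ip].
  rewrite (bigD1 p0) //= eqxx.
  under eq_bigr => k kp do rewrite (negbTE kp) /eM (negbTE kp).
  rewrite sum_delta_off /eM eqxx; case: (eqVneq j p0) => [jp|jp].
    by rewrite hs addr0.
  by rewrite subrr.
by rewrite (sum_delta_l (fun k => eM k j)) /eM (negbTE ip).
Qed.

Lemma eaff (x : C -> R) i : aff eM eb x i =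
  if i == p0 then s%:~R * x p0 + \sum_j (w j)%:~R * x j + beta%:~R else x i.
Proof.
rewrite /aff /eM /eb; case: (eqVneq i p0) => [ip|ip].
  subst i; rewrite (bigD1 p0) //= eqxx [\sum_j _](bigD1 p0) //= hw mul0r add0r.
  by congr (_ + _ + _); apply: eq_bigr => k /negbTE ->.
rewrite addr0 (bigD1 i) //= eqxx mul1r big1 ?addr0 // => k /negbTE ki.
by rewrite eq_sym ki mul0r.
Qed.

Lemma ue_elem (Q1 Q2 : (C -> R) -> Prop) :
  (forall x, Q1 x <-> Q2 (aff eM eb x)) -> UE Q1 Q2.
Proof. exact: (ue_of eMN eNM). Qed.

End Elem.
Section PosetLemmas.
Variables (d : Order.disp_t) (T : finPOrderType d).
Local Open Scope order_scope.
Implicit Types (x y m q r : T).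

Lemma min_ex (X : pred T) x0 : X x0 ->
  exists2 m, X m & forall r, X r -> ~~ (r < m).
Proof.
move=> Xx0; case: (arg_minnP (fun m => #|[set r | r < m]|) Xx0) => m Xm H.
exists m => // r Xr; apply/negP => rm.
have := H r Xr; rewrite leqNgt => /negP; apply.
apply: proper_card; apply/properP; split.
  by apply/subsetP => z; rewrite !inE => zr; apply: lt_trans zr rm.
by exists r; rewrite !inE ?ltxx.
Qed.

Lemma max_ex (X : pred T) x0 : X x0 ->
  exists2 m, X m & forall r, X r -> ~~ (m < r).
Proof.
move=> Xx0; case: (arg_minnP (fun m => #|[set r | m < r]|) Xx0) => m Xm H.
exists m => // r Xr; apply/negP => rm.
have := H r Xr; rewrite leqNgt => /negP; apply.
apply: proper_card; apply/properP; split.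
  by apply/subsetP => z; rewrite !inE => zr; apply: lt_trans rm zr.
by exists r; rewrite !inE ?ltxx.
Qed.

Lemma glob_min q : exists2 m, minimal m & m <= q.
Proof.
case: (@min_ex (fun m => m <= q) q (lexx q)) => m mq H.
exists m => //; apply/forallP => r; apply/negP => rm.
by move: (H r (ltW (lt_le_trans rm mq))); rewrite rm.
Qed.

Notation cov := (@covers d T).

Lemma cover_path x y : x < y -> exists s, path cov x s /\ last x s = y.
Proof.
move Hn : #|[set z | (x < z) && (z <= y)]| => n.
have {Hn} : (#|[set z | (x < z)%O && (z <= y)%O]| <= n)%N by rewrite Hn.
elim: n x => [|n IH] x Hn xy.
  by move: Hn; rewrite leqn0 cards_eq0 => /eqP/setP/(_ y); rewrite !inE xy lexx.
case: (@min_ex (fun z => (x < z) && (z <= y)) y); first by rewrite xy lexx.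
move=> z /andP[xz zy] zmin.
have cxz : cov x z.
  rewrite /covers xz; apply/forallP => r; apply/negP => /andP[xr rz].
  by move: (zmin r); rewrite xr (ltW (lt_le_trans rz zy)) rz => /(_ isT).
case: (eqVneq z y) => [zy'|zy'].
  by exists [:: z]; rewrite /= cxz zy'.
have zy2 : z < y by rewrite lt_neqAle zy' zy.
have Hn' : (#|[set w | (z < w)%O && (w <= y)%O]| <= n)%N.
  rewrite -ltnS; apply: leq_trans Hn; apply: proper_card; apply/properP; split.
    by apply/subsetP => w; rewrite !inE => /andP[zw ->]; rewrite (lt_trans xz zw).
  by exists z; rewrite !inE ?ltxx ?xz ?zy.
case: (IH z Hn' zy2) => s [ps ls].
by exists (z :: s); rewrite /= cxz ps ls.
Qed.

Lemma pairwise_comp (s : seq T) u v : pairwise (fun a b => a < b) s ->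
  u \in s -> v \in s -> u != v -> (u < v) || (v < u).
Proof.
elim: s => //= a s IH /andP[/allP ha ps].
rewrite !inE => /orP[/eqP->|us] /orP[/eqP->|vs]; rewrite ?eqxx //.
- by move=> _; rewrite ha.
- by move=> _; rewrite ha ?orbT.
- exact: IH.
Qed.

End PosetLemmas.
Section SetVersion.
Variables (R : realType) (d : Order.disp_t) (T : finPOrderType d).
Variables (A : {set T}) (lam : T -> nat).
Local Open Scope ring_scope.
Notation lt := (fun u v : T => (u < v)%O).

Definition isch (X : {set T}) := forall u v, u \in X -> v \in X -> u != v ->
  (u < v)%O || (v < u)%O.

Definition COs (U1 U2 : {set T}) (e : T -> R) : Prop :=
 [/\ (forall p a, p \in U1 -> a \in A -> (p < a)%O -> e p <= (lam a)%:R),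
     (forall q b, q \in U1 -> b \in A -> (b < q)%O -> (lam b)%:R <= e q),
     (forall p q, p \in U1 -> q \in U1 -> (p < q)%O -> e p <= e q),
     (forall p, p \in U2 -> 0 <= e p) &
     (forall a b X, a \in A :|: U1 -> b \in A :|: U1 -> X != set0 -> X \subset U2 ->
        isch X -> (forall r, r \in X -> (b < r)%O && (r < a)%O) ->
        \sum_(r in X) e r <= e a - e b)] /\
 (forall q X, q \in U1 -> X != set0 -> X \subset U2 -> isch X ->
    (forall r, r \in X -> (r < q)%O) -> \sum_(r in X) e r <= e q).

Lemma chainE b ps a : sorted lt (b :: rcons ps a) =
  [&& (b < a)%O, all (lt b) ps, all (lt^~ a) ps & pairwise lt ps].
Proof.
rewrite sorted_pairwise; last by move=> ? ? ? ; apply: lt_trans.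
rewrite pairwise_cons pairwise_rcons all_rcons.
by case: (b < a)%O; rewrite /= ?andbA.
Qed.

Lemma chainE' ps q : sorted lt (rcons ps q) = all (lt^~ q) ps && pairwise lt ps.
Proof.
rewrite sorted_pairwise; last by move=> ? ? ? ; apply: lt_trans.
by rewrite pairwise_rcons.
Qed.

Lemma set_of_list (ps : seq T) (f : T -> R) : pairwise lt ps ->
  [/\ isch [set r in ps], \sum_(r <- ps) f r = \sum_(r in [set r in ps]) f r &
      forall r, (r \in [set r in ps]) = (r \in ps)].
Proof.
move=> pw; split.
- by move=> u v; rewrite !inE; apply: pairwise_comp.
- have u : uniq ps by move: pw; rewrite -sorted_pairwise ?lt_sorted_uniq_le => [/andP[]|]//; apply: lt_trans.
  by rewrite big_uniq //; apply: eq_bigl => r; rewrite inE.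
- by move=> r; rewrite inE.
Qed.

Lemma list_of_set (X : {set T}) (f : T -> R) : isch X ->
  exists ps : seq T, [/\ pairwise lt ps, \sum_(r <- ps) f r = \sum_(r in X) f r &
      forall r, (r \in ps) = (r \in X)].
Proof.
move=> ch; exists (sort <=%O (enum_mem (mem X))).
have hm : forall r, (r \in sort <=%O (enum_mem (mem X))) = (r \in X).
  by move=> r; rewrite mem_sort mem_enum.
split => //.
- rewrite -sorted_pairwise; last by move=> ? ? ?; apply: lt_trans.
  rewrite lt_sorted_uniq_le sort_uniq enum_uniq /=.
  apply: (sort_sorted_in (P := [pred r | r \in X])); last by apply/allP => r; rewrite mem_enum.
  move=> u v uX vX; case: (eqVneq u v) => [->|uv]; first by rewrite lexx.
  by case/orP: (ch u v uX vX uv) => /ltW ->; rewrite ?orbT.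
- by rewrite (perm_big (enum_mem (mem X))) ?big_enum // perm_sort.
Qed.

Lemma CO_COs U1 U2 x :
  chain_order_polytope lam U1 U2 x <-> COs U1 U2 (@ext R d T A lam x).
Proof.
set e := ext lam x.
split.
- case=> [[h1 h2 h3 h4 h5] h6]; split; [split|] => //.
  + move=> a b X aA bA X0 XU ch hb.
    case: (list_of_set e ch) => ps [pw <- mem].
    apply: h5 => //.
    * apply: contraNneq X0 => ps0; apply/eqP/setP => r; rewrite -mem ps0 inE.
      by [].
    * by apply/allP => r; rewrite mem => /(subsetP XU).
    * rewrite chainE pw andbT; apply/and3P; split.
      - case/set0Pn: X0 => r rX; case/andP: (hb r rX) => br ra.
        exact: lt_trans br ra.
      - by apply/allP => r; rewrite mem => /hb/andP[].
      - by apply/allP => r; rewrite mem => /hb/andP[].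
  + move=> q X qU X0 XU ch hb.
    case: (list_of_set e ch) => ps [pw <- mem].
    apply: h6 => //.
    * apply: contraNneq X0 => ps0; apply/eqP/setP => r; rewrite -mem ps0 inE.
      by [].
    * by apply/allP => r; rewrite mem => /(subsetP XU).
    * by rewrite chainE' pw andbT; apply/allP => r; rewrite mem => /hb.
- case=> [[h1 h2 h3 h4 h5] h6]; split; [split|] => //.
  + move=> a b ps aA bA ps0 psU.
    rewrite chainE => /and4P[ba hb ha pw].
    case: (set_of_list e pw) => ch -> mem.
    apply: h5 => //.
    * case: ps ps0 {hb ha pw ch psU mem} => // r ps _; apply/set0Pn; exists r.
      by rewrite inE mem_head.
    * by apply/subsetP => r; rewrite mem => /(allP psU).
    * by move=> r; rewrite mem => rp; rewrite (allP hb r rp) (allP ha r rp).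
  + move=> q ps qU ps0 psU.
    rewrite chainE' => /andP[ha pw].
    case: (set_of_list e pw) => ch -> mem.
    apply: h6 => //.
    * case: ps ps0 {ha pw ch psU mem} => // r ps _; apply/set0Pn; exists r.
      by rewrite inE mem_head.
    * by apply/subsetP => r; rewrite mem => /(allP psU).
    * by move=> r; rewrite mem => rp; rewrite (allP ha r rp).
Qed.

End SetVersion.
Section Coord.
Variables (R : realType) (d : Order.disp_t) (T : finPOrderType d).
Variables (A : {set T}) (lam : T -> nat).
Local Open Scope ring_scope.
Notation C := (Defs.coord A).

Lemma ext_val (x : C -> R) (i : C) : ext lam x (val i) = x i.
Proof. by rewrite /ext valK. Qed.

Lemma ext_A (x : C -> R) q : q \in A -> ext lam x q = (lam q)%:R.
Proof. by move=> qA; rewrite /ext insubF // qA. Qed.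

Lemma sum_coord (G : T -> R) : \sum_(r | r \notin A) G r = \sum_(j : C) G (val j).
Proof.
rewrite (reindex_omap (val : C -> T) insub); last by move=> r rA; rewrite insubT.
apply: eq_bigl => j; rewrite valK eqxx andbT; by case: j.
Qed.

Lemma bridge (Y : {set T}) (x : C -> R) : (forall r, r \in Y -> r \notin A) ->
  \sum_(r in Y) ext lam x r = \sum_(j : C) ((val j \in Y)%:Z)%:~R * x j.
Proof.
move=> YA.
under [RHS]eq_bigr => j _ do rewrite -ext_val.
rewrite -(sum_coord (fun r => ((r \in Y)%:Z)%:~R * ext lam x r)).
rewrite big_mkcond [RHS]big_mkcond; apply: eq_bigr => r _.
case: (boolP (r \in Y)) => rY; first by rewrite (YA r rY) mul1r.
by case: (r \notin A); rewrite ?mul0r.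
Qed.

End Coord.
Section Flip.
Variables (R : realType) (d : Order.disp_t) (T : finPOrderType d).
Variables (A : {set T}) (lam : T -> nat) (W1 W2 : {set T}) (p : T).
Local Open Scope ring_scope.
Hypothesis hmp : marked_poset A.
Hypothesis hdis : [disjoint W1 & W2].
Hypothesis hun : W1 :|: W2 = ~: A.
Hypothesis hadm : admissible W1 W2.
Hypothesis hpW : p \in W1.
Hypothesis hbel : forall q, (q < p)%O -> q \notin W1.

Notation W1' := (W1 :\ p).
Notation W2' := (p |: W2).
Notation COs := (@COs R d T A lam).

Lemma W1nA q : q \in W1 -> q \notin A.
Proof. move=> h; have : q \in W1 :|: W2 by rewrite !inE h.
by rewrite hun inE. Qed.
Lemma W2nA q : q \in W2 -> q \notin A.
Proof. move=> h; have : q \in W1 :|: W2 by rewrite !inE h orbT.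
by rewrite hun inE. Qed.
Lemma nA12 q : q \notin A -> (q \in W1) || (q \in W2).
Proof. move=> h; have : q \in ~: A by rewrite !inE.
by rewrite -hun inE. Qed.
Lemma W12 q : q \in W1 -> q \notin W2.
Proof. by move=> h; rewrite (disjointFr hdis h). Qed.
Lemma pnA : p \notin A. Proof. exact: W1nA. Qed.
Lemma pnW2 : p \notin W2. Proof. exact: W12. Qed.
Lemma abv q : (p < q)%O -> q \notin W2.
Proof. by move=> pq; apply/negP => qW; apply: (hadm hpW qW). Qed.

Lemma sum_off (e e' : T -> R) (X : {set T}) : (forall q, q != p -> e' q = e q) ->
  p \notin X -> \sum_(r in X) e' r = \sum_(r in X) e r.
Proof.
move=> hee pX; apply: eq_bigr => r rX; apply: hee; apply: contraNneq pX => <-.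
by [].
Qed.

Definition NewP (e' : T -> R) : Prop :=
 [/\ 0 <= e' p,
   (forall a b (X : {set T}), a \in A :|: W1' -> (p < a)%O -> b \in A -> (b < p)%O ->
      X \subset W2 -> isch X -> (forall r, r \in X -> (b < r)%O && (r < p)%O) ->
      \sum_(r in X) e' r + e' p <= e' a - e' b) &
   (forall q (X : {set T}), q \in W1' -> (p < q)%O -> X \subset W2 -> isch X ->
      (forall r, r \in X -> (r < p)%O) -> \sum_(r in X) e' r + e' p <= e' q)].

Definition OldP (e : T -> R) : Prop :=
 [/\ (forall a, a \in A -> (p < a)%O -> e p <= (lam a)%:R),
     (forall b, b \in A -> (b < p)%O -> (lam b)%:R <= e p),
     (forall q, q \in W1 -> (p < q)%O -> e p <= e q),
     (forall b (X : {set T}), b \in A -> X != set0 -> X \subset W2 -> isch X ->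
        (forall r, r \in X -> (b < r)%O && (r < p)%O) -> \sum_(r in X) e r <= e p - e b) &
     (forall X : {set T}, X != set0 -> X \subset W2 -> isch X ->
        (forall r, r \in X -> (r < p)%O) -> \sum_(r in X) e r <= e p)].

Lemma split_p (X : {set T}) : p \in X -> X \subset W2' -> isch X ->
  [/\ X :\ p \subset W2, isch (X :\ p) & forall r, r \in X :\ p -> (r < p)%O].
Proof.
move=> pX XW ch; split.
- apply/subsetP => r; rewrite !inE => /andP[rp rX].
  by move: (subsetP XW r rX); rewrite !inE (negbTE rp).
- by move=> u v; rewrite !inE => /andP[_ uX] /andP[_ vX]; apply: ch.
- move=> r; rewrite !inE => /andP[rp rX].
  case/orP: (ch r p rX pX rp) => // pr.
  move: (subsetP XW r rX); rewrite !inE (negbTE rp) /= => rW.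
  by move: (abv pr); rewrite rW.
Qed.

Lemma gen_new (e e' : T -> R) : (forall q, q != p -> e' q = e q) ->
  COs W1 W2 e -> NewP e' -> COs W1' W2' e'.
Proof.
move=> hee [[h1 h2 h3 h4 h5] h6] [n1 n2 n3].
have neqp : forall q, q \in W1' -> q != p by move=> q; rewrite !inE => /andP[].
have inW1 : forall q, q \in W1' -> q \in W1 by move=> q; rewrite !inE => /andP[].
have nAp : forall q, q \in A -> q != p.
  by move=> q qA; apply: contraNneq pnA => <-.
have nA1p : forall q, q \in A :|: W1' -> q != p.
  by move=> q; rewrite !inE => /orP[/nAp|/andP[]].
have inA1 : forall q, q \in A :|: W1' -> q \in A :|: W1.
  by move=> q; rewrite !inE => /orP[->|/andP[_ ->]]; rewrite ?orbT.
split; [split|].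
- by move=> q a qW aA qa; rewrite (hee _ (neqp _ qW)); apply: h1 => //; apply: inW1.
- by move=> q b qW bA bq; rewrite (hee _ (neqp _ qW)); apply: h2 => //; apply: inW1.
- by move=> q q' qW q'W qq; rewrite (hee _ (neqp _ qW)) (hee _ (neqp _ q'W)); apply: h3 => //; apply: inW1.
- move=> q; rewrite !inE; case: (eqVneq q p) => [->|qp] //= qW.
  by rewrite hee //; apply: h4.
- move=> a b X aA bA X0 XW ch hb.
  case: (boolP (p \in X)) => pX.
    case: (split_p pX XW ch) => XW2 ch2 hlt.
    have hbp := hb p pX; case/andP: hbp => bp pa.
    have bA' : b \in A.
      move: bA; rewrite !inE => /orP[//|/andP[_ bW]].
      by move: (hbel bp); rewrite bW.
    rewrite (big_setD1 p pX) /= addrC; apply: n2 => // r rX.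
    have [br _] := andP (hb r (subsetP (subD1set X p) r rX)).
    by rewrite br hlt.
  have XW2 : X \subset W2.
    apply/subsetP => r rX; move: (subsetP XW r rX); rewrite !inE.
    by case: (eqVneq r p) => [rp|//]; move: pX; rewrite -rp rX.
  rewrite (sum_off hee pX) (hee _ (nA1p _ aA)) (hee _ (nA1p _ bA)); apply: h5 => //; exact: inA1.
- move=> q X qW X0 XW ch hb.
  case: (boolP (p \in X)) => pX.
    case: (split_p pX XW ch) => XW2 ch2 hlt.
    rewrite (big_setD1 p pX) /= addrC; apply: n3 => //.
    exact: hb.
  have XW2 : X \subset W2.
    apply/subsetP => r rX; move: (subsetP XW r rX); rewrite !inE.
    by case: (eqVneq r p) => [rp|//]; move: pX; rewrite -rp rX.
  rewrite (sum_off hee pX) (hee _ (neqp _ qW)); apply: h6 => //; exact: inW1.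
Qed.

Lemma gen_old (e e' : T -> R) : (forall q, q != p -> e' q = e q) ->
  COs W1' W2' e' -> OldP e -> COs W1 W2 e.
Proof.
move=> hee [[h1 h2 h3 h4 h5] h6] [o1 o2 o3 o4 o5].
have W1'E : forall q, q != p -> (q \in W1') = (q \in W1).
  by move=> q qp; rewrite !inE qp.
have nAp : forall q, q \in A -> q != p.
  by move=> q qA; apply: contraNneq pnA => <-.
have W2p : forall q, q \in W2 -> q != p.
  by move=> q qW; apply: contraNneq pnW2 => <-.
have sW : W2 \subset W2' by apply/subsetP => q qW; rewrite !inE qW orbT.
split; [split|].
- move=> q a qW aA qa; case: (eqVneq q p) => [qp|qp]; first by subst q; apply: o1.
  by rewrite -hee //; apply: h1 => //; rewrite W1'E.
- move=> q b qW bA bq; case: (eqVneq q p) => [qp|qp]; first by subst q; apply: o2.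
  by rewrite -hee //; apply: h2 => //; rewrite W1'E.
- move=> q q' qW q'W qq; case: (eqVneq q p) => [qp|qp]; first by subst q; apply: o3.
  case: (eqVneq q' p) => [q'p|q'p].
    by move: (@hbel q); rewrite -q'p qq qW => /(_ isT).
  by rewrite -!hee //; apply: h3 => //; rewrite W1'E.
- by move=> q qW; rewrite -hee ?W2p //; apply: h4; rewrite !inE qW orbT.
- move=> a b X aA bA X0 XW ch hb.
  have pX : p \notin X by apply/negP => /(subsetP XW); rewrite (negbTE pnW2).
  case: (eqVneq a p) => [ap|ap].
    subst a; have bp : (b < p)%O.
      by case/set0Pn: X0 => r /hb/andP[br rp]; apply: lt_trans br rp.
    have bA' : b \in A.
      move: bA; rewrite !inE => /orP[//|bW]; by move: (hbel bp); rewrite bW.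
    exact: o4.
  case: (eqVneq b p) => [bp|bp].
    subst b; case/set0Pn: X0 => r rX; case/andP: (hb r rX) => pr _.
    by move: (abv pr); rewrite (subsetP XW r rX).
  rewrite -(sum_off hee pX) -!hee //; apply: h5 => //.
  + by move: aA; rewrite !inE ap.
  + by move: bA; rewrite !inE bp.
  + exact: subset_trans XW sW.
- move=> q X qW X0 XW ch hb.
  have pX : p \notin X by apply/negP => /(subsetP XW); rewrite (negbTE pnW2).
  case: (eqVneq q p) => [qp|qp]; first by subst q; apply: o5.
  rewrite -(sum_off hee pX) -hee //; apply: h6 => //.
  + by rewrite W1'E.
  + exact: subset_trans XW sW.
Qed.


Hypothesis hW1A : forall q, q \in W1 -> q \notin A.

Lemma lt_ab (a b : T) : (b <= a)%O -> b != a -> (b < a)%O.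
Proof. by move=> ba bna; rewrite lt_neqAle bna ba. Qed.

Lemma min_below q : q \notin A -> exists2 m, m \in A & (m < q)%O.
Proof.
move=> qA; case: (glob_min q) => m mmin mq; exists m.
  by apply: hmp; rewrite mmin.
by apply: lt_ab => //; apply: contraNneq qA => <-; apply: hmp; rewrite mmin.
Qed.

Lemma chU1 (X : {set T}) : isch X -> (forall r, r \in X -> (r < p)%O) -> isch (p |: X).
Proof.
move=> ch hX u v; rewrite !inE => /orP[/eqP->|uX] /orP[/eqP->|vX]; rewrite ?eqxx //.
- by move=> _; rewrite hX ?orbT.
- by move=> _; rewrite hX.
- exact: ch.
Qed.

Lemma sumU1 (X : {set T}) (f : T -> R) : X \subset W2 ->
  \sum_(r in p |: X) f r = f p + \sum_(r in X) f r.
Proof.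
move=> XW; rewrite big_setU1 //=; apply/negP => /(subsetP XW).
by rewrite (negbTE pnW2).
Qed.

Lemma U1W2 (X : {set T}) : X \subset W2 -> p |: X \subset W2'.
Proof. by move=> XW; apply: setUS. Qed.

Lemma new_v (e' : T -> R) : COs W1' W2' e' ->
  forall a b (X : {set T}), a \in A :|: W1' -> b \in A :|: W1' -> X \subset W2 -> isch X ->
  (forall r, r \in X -> (b < r)%O && (r < p)%O) -> (b < p)%O -> (p < a)%O ->
  e' p + \sum_(r in X) e' r <= e' a - e' b.
Proof.
case=> [[_ _ _ _ h5] _] a b X aA bA XW ch hb bp pa.
rewrite -sumU1 //; apply: h5 => //.
- by apply/set0Pn; exists p; rewrite !inE eqxx.
- exact: U1W2.
- by apply: chU1 => // r /hb/andP[].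
- move=> r; rewrite !inE => /orP[/eqP->|rX]; first by rewrite bp pa.
  by case/andP: (hb r rX) => -> rp; rewrite (lt_trans rp pa).
Qed.

Lemma new_vi (e' : T -> R) : COs W1' W2' e' ->
  forall q (X : {set T}), q \in W1' -> X \subset W2 -> isch X ->
  (forall r, r \in X -> (r < p)%O) -> (p < q)%O ->
  e' p + \sum_(r in X) e' r <= e' q.
Proof.
case=> [_ h6] q X qW XW ch hb pq.
rewrite -sumU1 //; apply: h6 => //.
- by apply/set0Pn; exists p; rewrite !inE eqxx.
- exact: U1W2.
- exact: chU1.
- by move=> r; rewrite !inE => /orP[/eqP->|/hb rp] //; apply: lt_trans rp pq.
Qed.

Lemma old_ge0 (e : T -> R) : COs W1 W2 e -> forall q, q \in W1 -> 0 <= e q.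
Proof.
case=> [[_ h2 _ _ _] _] q qW; case: (min_below (hW1A qW)) => m mA mq.
by apply: le_trans (h2 q m qW mA mq).
Qed.

Lemma old_iv (e : T -> R) : (forall a, a \in A -> e a = (lam a)%:R) -> COs W1 W2 e ->
  forall b (X : {set T}), b \in A -> (b < p)%O -> X \subset W2 -> isch X ->
  (forall r, r \in X -> (b < r)%O && (r < p)%O) ->
  \sum_(r in X) e r <= e p - (lam b)%:R.
Proof.
move=> heA CO; case: (CO) => [[_ h2 _ _ h5] _] b X bA bp XW ch hb.
case: (eqVneq X set0) => [->|X0].
  by rewrite big_set0 subr_ge0; apply: h2.
by rewrite -heA //; apply: h5 => //; rewrite !inE ?bA ?hpW ?orbT.
Qed.

Lemma old_vi (e : T -> R) : COs W1 W2 e ->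
  forall (X : {set T}), X \subset W2 -> isch X ->
  (forall r, r \in X -> (r < p)%O) -> \sum_(r in X) e r <= e p.
Proof.
move=> CO; case: (CO) => [_ h6] X XW ch hb.
case: (eqVneq X set0) => [->|X0]; first by rewrite big_set0 (old_ge0 CO).
exact: h6.
Qed.

Section CaseA1.
Variable c : T.
Hypotheses (hcW : c \in W1) (hpc : (p < c)%O) (hc : forall a, (p < a)%O -> (c <= a)%O).

Lemma caseA1 (e e' : T -> R) : (forall a, a \in A -> e a = (lam a)%:R) ->
  (forall q, q != p -> e' q = e q) -> e' p = e c - e p ->
  COs W1 W2 e <-> COs W1' W2' e'.
Proof.
move=> heA hee hp.
have cp : c != p by apply: contraTneq hpc => ->; rewrite ltxx.
have heA' : forall a, a \in A -> e' a = (lam a)%:R.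
  by move=> a aA; rewrite hee ?heA //; apply: contraNneq pnA => <-.
have cW' : c \in W1' by rewrite !inE cp hcW.
split => CO.
- apply: (gen_new hee CO); case: (CO) => [[h1 h2 h3 h4 h5] h6].
  have eca : forall a, a \in A :|: W1' -> (p < a)%O -> e c <= e a.
    move=> a aA pa; case: (eqVneq c a) => [->//|ca].
    have cla := lt_ab (hc pa) ca.
    move: aA; rewrite !inE => /orP[aA|/andP[_ aW]].
      by rewrite (heA a aA); apply: h1.
    exact: h3.
  split.
  + by rewrite hp subr_ge0; apply: h3.
  + move=> a b X aA pa bA bp XW ch hb.
    have pX : p \notin X by apply/negP => /(subsetP XW); rewrite (negbTE pnW2).
    have ap : a != p by apply: contraTneq pa => ->; rewrite ltxx.
    have bp' : b != p by apply: contraNneq pnA => <-.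
    rewrite (sum_off hee pX) hp (hee a ap) (hee b bp').
    have := old_iv heA CO bA bp XW ch hb; have := eca a aA pa.
    rewrite (heA b bA); lra.
  + move=> q X qW pq XW ch hb.
    have pX : p \notin X by apply/negP => /(subsetP XW); rewrite (negbTE pnW2).
    rewrite (sum_off hee pX) hp hee; last by move: qW; rewrite !inE => /andP[].
    have qA1 : q \in A :|: W1' by rewrite inE qW orbT.
    have := old_vi CO XW ch hb; have := eca q qA1 pq.
    lra.
- apply: (gen_old hee CO); case: (CO) => [[h1 h2 h3 h4 h5] h6].
  have hp' : e p = e' c - e' p by rewrite hp (hee c cp); lra.
  have e'p0 : 0 <= e' p by apply: h4; rewrite !inE eqxx.
  have cA : c \in A :|: W1' by rewrite inE cW' orbT.
  split.
  + move=> a aA pa; have ca : c != a by apply: contraNneq (hW1A hcW) => ->.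
    have := h1 c a cW' aA (lt_ab (hc pa) ca); rewrite hp'; lra.
  + move=> b bA bp.
    have bA1 : b \in A :|: W1' by rewrite inE bA.
    have ch0 : isch (set0 : {set T}) by move=> u v; rewrite in_set0.
    have hb0 : forall r, r \in (set0 : {set T}) -> (b < r)%O && (r < p)%O by move=> r; rewrite in_set0.
    have := new_v CO cA bA1 (sub0set _) ch0 hb0 bp hpc.
    rewrite big_set0 addr0 (heA' b bA) hp'; lra.
  + move=> q qW pq; case: (eqVneq c q) => [<-|cq]; first by rewrite hp'; lra.
    have qp : q != p by apply: contraTneq pq => ->; rewrite ltxx.
    have qW' : q \in W1' by rewrite !inE qp qW.
    have := h3 c q cW' qW' (lt_ab (hc pq) cq).
    rewrite hp' (hee q qp); lra.
  + move=> b X bA X0 XW ch hb.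
    have bp : (b < p)%O by case/set0Pn: X0 => r /hb/andP[br rp]; apply: lt_trans br rp.
    have pX : p \notin X by apply/negP => /(subsetP XW); rewrite (negbTE pnW2).
    have bA1 : b \in A :|: W1' by rewrite inE bA.
    have bp' : b != p by apply: contraNneq pnA => <-.
    have := new_v CO cA bA1 XW ch hb bp hpc.
    rewrite (sum_off hee pX) hp' (hee b bp'); lra.
  + move=> X X0 XW ch hb.
    have pX : p \notin X by apply/negP => /(subsetP XW); rewrite (negbTE pnW2).
    have := new_vi CO cW' XW ch hb hpc.
    rewrite (sum_off hee pX) hp'; lra.
Qed.
End CaseA1.

Lemma chain_lower (X : {set T}) : X != set0 -> X \subset W2 -> isch X ->
  exists2 m, m \in A & forall r, r \in X -> (m < r)%O.
Proof.
case/set0Pn => r1 r1X XW ch.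
case: (@min_ex _ _ (fun r => r \in X) r1 r1X) => r0 r0X r0min.
case: (min_below (W2nA (subsetP XW r0 r0X))) => m mA mr0.
exists m => // r rX; case: (eqVneq r r0) => [->//|rr0].
case/orP: (ch r r0 rX r0X rr0) => [rr|rr]; last exact: lt_trans mr0 rr.
by move: (r0min r rX); rewrite rr.
Qed.

Section CaseA2.
Variables c ast : T.
Hypotheses (hcA : c \in A) (hpc : (p < c)%O) (hc : forall a, (p < a)%O -> (c <= a)%O).
Hypotheses (hastA : ast \in A) (hcast : (c <= ast)%O)
  (hmin : forall a, a \in A -> (c <= a)%O -> (lam ast <= lam a)%N).

Lemma caseA2 (e e' : T -> R) : (forall a, a \in A -> e a = (lam a)%:R) ->
  (forall q, q != p -> e' q = e q) -> e' p = (lam ast)%:R - e p ->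
  COs W1 W2 e <-> COs W1' W2' e'.
Proof.
move=> heA hee hp.
have heA' : forall a, a \in A -> e' a = (lam a)%:R.
  by move=> a aA; rewrite hee ?heA //; apply: contraNneq pnA => <-.
have past : (p < ast)%O by apply: lt_le_trans hpc hcast.
have lmin : forall a, a \in A -> (c <= a)%O -> (lam ast)%:R <= (lam a)%:R :> R.
  by move=> a aA ca; rewrite ler_nat; apply: hmin.
have lc : (lam ast)%:R <= (lam c)%:R :> R by apply: lmin.
have cne : forall q, q \in W1 -> c != q by move=> q qW; apply: contraNneq (hW1A qW) => <-.
have W1'1 : forall q, q \in W1' -> q \in W1 by move=> q; rewrite !inE => /andP[].
split => CO.
- apply: (gen_new hee CO); case: (CO) => [[h1 h2 h3 h4 h5] h6].
  have eca : forall a, a \in A :|: W1' -> (p < a)%O -> (lam ast)%:R <= e a.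
    move=> a aA pa.
    move: aA; rewrite !inE => /orP[aA|/andP[_ aW]].
      by rewrite (heA a aA); apply: lmin => //; apply: hc.
    apply: le_trans lc _; apply: h2 => //; apply: lt_ab (hc pa) (cne a aW).
  split.
  + by rewrite hp subr_ge0; apply: h1.
  + move=> a b X aA pa bA bp XW ch hb.
    have pX : p \notin X by apply/negP => /(subsetP XW); rewrite (negbTE pnW2).
    have ap : a != p by apply: contraTneq pa => ->; rewrite ltxx.
    have bp' : b != p by apply: contraNneq pnA => <-.
    rewrite (sum_off hee pX) hp (hee a ap) (hee b bp').
    have := old_iv heA CO bA bp XW ch hb; have := eca a aA pa.
    rewrite (heA b bA); lra.
  + move=> q X qW pq XW ch hb.
    have pX : p \notin X by apply/negP => /(subsetP XW); rewrite (negbTE pnW2).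
    rewrite (sum_off hee pX) hp hee; last by move: qW; rewrite !inE => /andP[].
    have qA1 : q \in A :|: W1' by rewrite inE qW orbT.
    have := old_vi CO XW ch hb; have := eca q qA1 pq.
    lra.
- apply: (gen_old hee CO); case: (CO) => [[h1 h2 h3 h4 h5] h6].
  have hp' : e p = (lam ast)%:R - e' p by rewrite hp; lra.
  have e'p0 : 0 <= e' p by apply: h4; rewrite !inE eqxx.
  have aA1 : ast \in A :|: W1' by rewrite inE hastA.
  split.
  + move=> a aA pa; have := lmin a aA (hc pa); rewrite hp'; lra.
  + move=> b bA bp.
    have bA1 : b \in A :|: W1' by rewrite inE bA.
    have ch0 : isch (set0 : {set T}) by move=> u v; rewrite in_set0.
    have hb0 : forall r, r \in (set0 : {set T}) -> (b < r)%O && (r < p)%O by move=> r; rewrite in_set0.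
    have := new_v CO aA1 bA1 (sub0set _) ch0 hb0 bp past.
    rewrite big_set0 addr0 (heA' b bA) (heA' ast hastA) hp'; lra.
  + move=> q qW pq.
    have qp : q != p by apply: contraTneq pq => ->; rewrite ltxx.
    have qW' : q \in W1' by rewrite !inE qp qW.
    have := h2 q c qW' hcA (lt_ab (hc pq) (cne q qW)).
    rewrite hp' (hee q qp); lra.
  + move=> b X bA X0 XW ch hb.
    have bp : (b < p)%O by case/set0Pn: X0 => r /hb/andP[br rp]; apply: lt_trans br rp.
    have pX : p \notin X by apply/negP => /(subsetP XW); rewrite (negbTE pnW2).
    have bA1 : b \in A :|: W1' by rewrite inE bA.
    have bp' : b != p by apply: contraNneq pnA => <-.
    have := new_v CO aA1 bA1 XW ch hb bp past.
    rewrite (sum_off hee pX) hp' (hee b bp') (heA' ast hastA); lra.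
  + move=> X X0 XW ch hb.
    have pX : p \notin X by apply/negP => /(subsetP XW); rewrite (negbTE pnW2).
    case: (chain_lower X0 XW ch) => m mA hm.
    have mp : (m < p)%O by case/set0Pn: X0 => r rX; apply: lt_trans (hm r rX) (hb r rX).
    have mA1 : m \in A :|: W1' by rewrite inE mA.
    have hb' : forall r, r \in X -> (m < r)%O && (r < p)%O by move=> r rX; rewrite hm ?hb.
    have := new_v CO aA1 mA1 XW ch hb' mp past.
    rewrite (sum_off hee pX) hp' (heA' ast hastA) (heA' m mA).
    have : 0 <= (lam m)%:R :> R by [].
    lra.
Qed.
End CaseA2.

Lemma sub_sum (X Y : {set T}) (f : T -> R) : X \subset Y -> (forall r, r \in Y -> 0 <= f r) ->
  \sum_(r in X) f r <= \sum_(r in Y) f r.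
Proof.
move=> XY hf; rewrite [E in _ <= E](@big_setID _ _ _ _ Y X) /= (setIidPr XY) lerDl.
by apply: sumr_ge0 => r; rewrite !inE => /andP[_]; apply: hf.
Qed.

Section CaseB.
Variables b0 bst : T.
Hypothesis htot : forall u v, (u < p)%O -> (v < p)%O -> (u <= v)%O || (v <= u)%O.
Hypotheses (hb0A : b0 \in A) (hb0p : (b0 < p)%O)
  (hb0max : forall b, b \in A -> (b < p)%O -> ~~ (b0 < b)%O).
Hypotheses (hbstA : bst \in A) (hbstp : (bst < p)%O)
  (hbstB : [forall r, (r \in W2) ==> ~~ ((bst < r)%O && (r < b0)%O)])
  (hbmax : forall b, b \in A -> (b < p)%O ->
     [forall r, (r \in W2) ==> ~~ ((b < r)%O && (r < b0)%O)] -> (lam b <= lam bst)%N).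

Definition Cs := [set r | (b0 < r)%O && (r < p)%O].

Lemma le_b0 b : b \in A -> (b < p)%O -> (b <= b0)%O.
Proof.
move=> bA bp; case/orP: (htot bp hb0p) => // b0b.
case: (eqVneq b0 b) => [->|nb]; first exact: lexx.
by move: (hb0max bA bp); rewrite (lt_ab b0b nb).
Qed.

Lemma Cs_W2 : Cs \subset W2.
Proof.
apply/subsetP => r; rewrite inE => /andP[b0r rp].
have rA : r \notin A by apply/negP => rA; move: (hb0max rA rp); rewrite b0r.
by move: (nA12 rA); rewrite (negbTE (hbel rp)).
Qed.

Lemma Cs_ch : isch Cs.
Proof.
move=> u v; rewrite !inE => /andP[_ up] /andP[_ vp] uv.
case/orP: (htot up vp) => h; first by rewrite (lt_ab h uv).
by rewrite (lt_ab h) ?orbT // eq_sym.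
Qed.

Lemma Cs_lt r : r \in Cs -> (r < p)%O.
Proof. by rewrite inE => /andP[]. Qed.

Lemma bst_lt r : r \in Cs -> (bst < r)%O.
Proof.
rewrite inE => /andP[b0r _]; apply: le_lt_trans b0r; exact: le_b0.
Qed.

Lemma lb0 : (lam b0 <= lam bst)%N.
Proof.
apply: hbmax => //; apply/forallP => r; apply/implyP => _; apply/negP => /andP[h1 h2].
by move: (lt_trans h1 h2); rewrite ltxx.
Qed.

Section KL.
Variable f : T -> R.
Hypothesis hv : forall a b (X : {set T}), a \in A -> b \in A -> X != set0 -> X \subset W2 ->
  isch X -> (forall r, r \in X -> (b < r)%O && (r < a)%O) ->
  \sum_(r in X) f r <= (lam a)%:R - (lam b)%:R.
Hypothesis hnn : forall r, r \in W2 -> 0 <= f r.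

Lemma KL b (X : {set T}) : b \in A -> (b < p)%O -> X \subset W2 -> isch X ->
  (forall r, r \in X -> (b < r)%O && (r < p)%O) ->
  \sum_(r in X) f r <= (lam bst)%:R - (lam b)%:R + \sum_(r in Cs) f r.
Proof.
move=> bA bp XW ch hb.
have lb0' : (lam b0)%:R <= (lam bst)%:R :> R by rewrite ler_nat lb0.
rewrite (@big_setID _ _ _ _ X [set r | (r < b0)%O]) /=.
have s2 : \sum_(r in X :\: [set r | (r < b0)%O]) f r <= \sum_(r in Cs) f r.
  apply: sub_sum; last by move=> r /(subsetP Cs_W2); apply: hnn.
  apply/subsetP => r; rewrite !inE => /andP[nrb rX].
  case/andP: (hb r rX) => br rp; rewrite rp andbT.
  have rb0 : r != b0 by apply: contraTneq (subsetP XW r rX) => ->; apply/negP => /W2nA; rewrite hb0A.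
  case/orP: (htot rp hb0p) => h; last by rewrite lt_neqAle h eq_sym rb0.
  by move: nrb; rewrite (lt_ab h rb0).
suff s1 : \sum_(r in X :&: [set r | (r < b0)%O]) f r <= (lam bst)%:R - (lam b)%:R.
  by apply: le_trans (lerD s1 s2) _.
set X1 := X :&: _.
case: (eqVneq X1 set0) => [->|X10].
  rewrite big_set0 subr_ge0.
  case: (boolP [forall r, (r \in W2) ==> ~~ ((b < r)%O && (r < b0)%O)]) => hB.
    by rewrite ler_nat; apply: hbmax.
  move: hB => /forallPn [r]; rewrite negb_imply negbK => /andP[rW /andP[br rb0]].
  have r0 : [set r] != set0 by apply/set0Pn; exists r; rewrite inE.
  have := hv hb0A bA r0.
  rewrite big_set1.
  have rW' : [set r] \subset W2 by rewrite sub1set.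
  have ch1 : isch [set r] by move=> u v; rewrite !inE => /eqP-> /eqP->; rewrite eqxx.
  have hb1 : forall r', r' \in [set r] -> (b < r')%O && (r' < b0)%O.
    by move=> r'; rewrite inE => /eqP->; rewrite br rb0.
  move=> /(_ rW' ch1 hb1); have := hnn rW; lra.
apply: le_trans (_ : _ <= (lam b0)%:R - (lam b)%:R) _; last by lra.
apply: hv => //.
- by apply: subset_trans XW; apply: subsetIl.
- by move=> u v; rewrite !inE => /andP[uX _] /andP[vX _]; apply: ch.
- by move=> r; rewrite !inE => /andP[rX ->]; case/andP: (hb r rX) => ->.
Qed.

Lemma KL0 (X : {set T}) : X \subset W2 -> isch X -> (forall r, r \in X -> (r < p)%O) ->
  \sum_(r in X) f r <= (lam bst)%:R + \sum_(r in Cs) f r.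
Proof.
move=> XW ch hX.
have sC : 0 <= \sum_(r in Cs) f r.
  by apply: sumr_ge0 => r /(subsetP Cs_W2); apply: hnn.
case: (eqVneq X set0) => [->|X0]; first by rewrite big_set0; have := ler0n R (lam bst); lra.
case: (chain_lower X0 XW ch) => m mA hm.
have mp : (m < p)%O by case/set0Pn: X0 => r rX; apply: lt_trans (hm r rX) (hX r rX).
have := KL mA mp XW ch (fun r rX => introT andP (conj (hm r rX) (hX r rX))).
have : 0 <= (lam m)%:R :> R by [].
lra.
Qed.
End KL.

Lemma caseB (e e' : T -> R) : (forall a, a \in A -> e a = (lam a)%:R) ->
  (forall q, q != p -> e' q = e q) ->
  e' p = e p - (lam bst)%:R - \sum_(r in Cs) e r ->
  COs W1 W2 e <-> COs W1' W2' e'.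
Proof.
move=> heA hee hp.
have heA' : forall a, a \in A -> e' a = (lam a)%:R.
  by move=> a aA; rewrite hee ?heA //; apply: contraNneq pnA => <-.
have pC : p \notin Cs by rewrite inE ltxx andbF.
have sCe : \sum_(r in Cs) e' r = \sum_(r in Cs) e r by apply: sum_off.
have A1 : forall a, a \in A -> a \in A :|: W1 by move=> a aA; rewrite inE aA.
have A1' : forall a, a \in A -> a \in A :|: W1' by move=> a aA; rewrite inE aA.
split => CO.
- apply: (gen_new hee CO); case: (CO) => [[h1 h2 h3 h4 h5] h6].
  have hv : forall a b (X : {set T}), a \in A -> b \in A -> X != set0 -> X \subset W2 ->
      isch X -> (forall r, r \in X -> (b < r)%O && (r < a)%O) ->
      \sum_(r in X) e r <= (lam a)%:R - (lam b)%:R.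
    by move=> a b X aA bA X0 XW ch hb; rewrite -!heA //; apply: h5 => //; apply: A1.
  have epa : forall a, a \in A :|: W1' -> (p < a)%O -> e p <= e a.
    move=> a; rewrite !inE => /orP[aA|/andP[_ aW]] pa.
      by rewrite (heA a aA); apply: h1.
    exact: h3.
  split.
  + rewrite hp; have := old_iv heA CO hbstA hbstp Cs_W2 Cs_ch.
    move=> /(_ (fun r rC => introT andP (conj (bst_lt rC) (Cs_lt rC)))); lra.
  + move=> a b X aA pa bA bp XW ch hb.
    have pX : p \notin X by apply/negP => /(subsetP XW); rewrite (negbTE pnW2).
    have ap : a != p by apply: contraTneq pa => ->; rewrite ltxx.
    have bp' : b != p by apply: contraNneq pnA => <-.
    rewrite (sum_off hee pX) hp (hee a ap) (hee b bp') (heA b bA).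
    have := KL hv h4 bA bp XW ch hb; have := epa a aA pa; lra.
  + move=> q X qW pq XW ch hb.
    have pX : p \notin X by apply/negP => /(subsetP XW); rewrite (negbTE pnW2).
    have qp : q != p by move: qW; rewrite !inE => /andP[].
    rewrite (sum_off hee pX) hp (hee q qp).
    have qA1 : q \in A :|: W1' by rewrite inE qW orbT.
    have := KL0 hv h4 XW ch hb; have := epa q qA1 pq; lra.
- apply: (gen_old hee CO); case: (CO) => [[h1 h2 h3 h4 h5] h6].
  have sW : W2 \subset W2' by apply/subsetP => q qW; rewrite !inE qW orbT.
  have hv : forall a b (X : {set T}), a \in A -> b \in A -> X != set0 -> X \subset W2 ->
      isch X -> (forall r, r \in X -> (b < r)%O && (r < a)%O) ->
      \sum_(r in X) e' r <= (lam a)%:R - (lam b)%:R.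
    move=> a b X aA bA X0 XW ch hb; rewrite -(heA' a aA) -(heA' b bA).
    by apply: h5 => //; [apply: A1' | apply: A1' | apply: subset_trans XW sW].
  have h4' : forall r, r \in W2 -> 0 <= e' r by move=> r rW; apply: h4; rewrite !inE rW orbT.
  have e'p0 : 0 <= e' p by apply: h4; rewrite !inE eqxx.
  have hp' : e p = e' p + (lam bst)%:R + \sum_(r in Cs) e' r by rewrite sCe hp; lra.
  have hbC : forall r, r \in Cs -> (bst < r)%O && (r < p)%O.
    by move=> r rC; rewrite bst_lt ?Cs_lt.
  have nv : forall a, a \in A :|: W1' -> (p < a)%O ->
      e' p + \sum_(r in Cs) e' r <= e' a - (lam bst)%:R.
    by move=> a aA pa; rewrite -(heA' bst hbstA); apply: new_v => //; [apply: A1' | apply: Cs_W2 | apply: Cs_ch].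
  split.
  + move=> a aA pa; have := nv a (A1' a aA) pa; rewrite hp' (heA' a aA); lra.
  + move=> b bA bp.
    have ch0 : isch (set0 : {set T}) by move=> u v; rewrite in_set0.
    have hb0 : forall r, r \in (set0 : {set T}) -> (b < r)%O && (r < p)%O by move=> r; rewrite in_set0.
    have := KL hv h4' bA bp (sub0set _) ch0 hb0.
    rewrite big_set0 hp'; lra.
  + move=> q qW pq.
    have qp : q != p by apply: contraTneq pq => ->; rewrite ltxx.
    have qA1 : q \in A :|: W1' by rewrite !inE qp qW orbT.
    have := nv q qA1 pq; rewrite hp' (hee q qp); lra.
  + move=> b X bA X0 XW ch hb.
    have bp : (b < p)%O by case/set0Pn: X0 => r /hb/andP[br rp]; apply: lt_trans br rp.
    have pX : p \notin X by apply/negP => /(subsetP XW); rewrite (negbTE pnW2).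
    have := KL hv h4' bA bp XW ch hb.
    rewrite (sum_off hee pX) hp' (heA b bA); lra.
  + move=> X X0 XW ch hb.
    have pX : p \notin X by apply/negP => /(subsetP XW); rewrite (negbTE pnW2).
    have := KL0 hv h4' XW ch hb.
    rewrite (sum_off hee pX) hp'; lra.
Qed.
End CaseB.


Notation C := (Defs.coord A).

Lemma flip_ue_gen (s sg beta : int) (Y : {set T}) : s * s = 1 ->
  (forall r, r \in Y -> r \notin A) -> p \notin Y ->
  (forall e e' : T -> R, (forall a, a \in A -> e a = (lam a)%:R) ->
     (forall q, q != p -> e' q = e q) ->
     e' p = s%:~R * e p + sg%:~R * \sum_(r in Y) e r + beta%:~R ->
     (COs W1 W2 e <-> COs W1' W2' e')) ->
  @unimodular_equiv R d T A (chain_order_polytope lam W1 W2) (chain_order_polytope lam W1' W2').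
Proof.
move=> hs YA pY H.
pose p0 : C := exist _ p pnA.
pose w : C -> int := fun j => sg * (val j \in Y)%:Z.
have hw : w p0 = 0 by rewrite /w /= (negbTE pY) mulr0.
apply: (ue_elem (p0 := p0) (w := w) (beta := beta) hs) => x.
rewrite !CO_COs; apply: H.
- by move=> a aA; rewrite ext_A.
- move=> q qp; case: (boolP (q \in A)) => qA; first by rewrite !ext_A.
  have := ext_val lam (aff (eM p0 s w) (eb p0 beta) x) (exist _ q qA).
  rewrite /= => ->; rewrite eaff //.
  have -> : (exist (fun q => q \notin A) q qA == p0) = false.
    by apply/negbTE; apply: contra qp => /eqP[->].
  by rewrite -(ext_val lam x (exist _ q qA)).
- have := ext_val lam (aff (eM p0 s w) (eb p0 beta) x) p0.
  rewrite /= => ->; rewrite eaff // eqxx (ext_val lam x p0).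
  congr (_ + _ + _); rewrite (@bridge _ _ _ _ lam Y x YA) mulr_sumr; apply: eq_bigr => j _.
  by rewrite /w intrM mulrA.
Qed.


Lemma chain_through u : (u < p)%O -> exists s, max_chain_to p s /\ u \in s.
Proof.
move=> up; case: (glob_min u) => m mmin mu.
case: (cover_path up) => s2 [ps2 ls2].
case: (eqVneq m u) => [mu'|mu'].
  by subst m; exists (u :: s2); split; [split | rewrite mem_head].
case: (cover_path (lt_ab mu mu')) => s1 [ps1 ls1].
exists (m :: (s1 ++ s2)); split.
  split => //; first by rewrite cat_path ps1 ls1 ps2.
  by rewrite last_cat ls1.
by rewrite -cat_cons mem_cat -ls1 mem_last.
Qed.

Lemma chain_comp s u v : max_chain_to p s -> u \in s -> v \in s -> u != v ->
  (u < v)%O || (v < u)%O.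
Proof.
case: s => // r0 rest [_ ps _] us vs uv.
have : sorted (fun a b => (a < b)%O) (r0 :: rest).
  by apply: (sub_path _ ps) => a b /andP[].
rewrite sorted_pairwise; last by move=> ? ? ?; apply: lt_trans.
by move=> pw; apply: pairwise_comp pw us vs uv.
Qed.

Lemma nonstar_tot : ~ star_elem p -> (2 <= #|up_covers p|)%N ->
  forall u v, (u < p)%O -> (v < p)%O -> (u <= v)%O || (v <= u)%O.
Proof.
move=> nst hc u v up vp.
case: (eqVneq u v) => [->|uv]; first by rewrite lexx.
case: (chain_through up) => su [csu usu].
case: (chain_through vp) => sv [csv vsv].
case: (boolP (v \in su)) => vsu.
  by case/orP: (chain_comp csu usu vsu uv) => /ltW ->; rewrite ?orbT.
exfalso; apply: nst; split => //; exists su, sv; split => //.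
by move=> e; move: vsu; rewrite e vsv.
Qed.

Lemma int_cast (z : int) : (z%:~R : R) = z%:~R. Proof. by []. Qed.

Lemma flip_step : ~ star_elem p ->
  @unimodular_equiv R d T A (chain_order_polytope lam W1 W2) (chain_order_polytope lam W1' W2').
Proof.
move=> nst.
case: (boolP (2 <= #|up_covers p|)%N) => hcard.
- have htot := nonstar_tot nst hcard.
  case: (min_below pnA) => m mA mp.
  case: (@max_ex _ _ (fun b => (b \in A) && (b < p)%O) m); first by rewrite mA mp.
  move=> b0 /andP[b0A b0p] b0max.
  have hb0max : forall b, b \in A -> (b < p)%O -> ~~ (b0 < b)%O.
    by move=> b bA bp; apply: b0max; rewrite bA bp.
  pose Bp := fun b => [&& b \in A, (b < p)%O &
     [forall r, (r \in W2) ==> ~~ ((b < r)%O && (r < b0)%O)]].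
  have Bb0 : Bp b0.
    rewrite /Bp b0A b0p; apply/forallP => r; apply/implyP => _; apply/negP => /andP[h1 h2].
    by move: (lt_trans h1 h2); rewrite ltxx.
  case: (arg_maxnP (fun b => lam b) Bb0) => bst /and3P[bstA bstp bstB] bmax.
  have hbmax : forall b, b \in A -> (b < p)%O ->
     [forall r, (r \in W2) ==> ~~ ((b < r)%O && (r < b0)%O)] -> (lam b <= lam bst)%N.
    by move=> b bA bp bB; apply: bmax; rewrite /Bp bA bp.
  apply: (@flip_ue_gen 1 (-1) (- (lam bst)%:Z) (Cs b0)) => //.
  + by move=> r /(subsetP (Cs_W2 hb0max)); apply: W2nA.
  + by rewrite inE ltxx andbF.
  move=> e e' heA hee hp.
  apply: (caseB htot b0A b0p hb0max bstA bstp hbmax heA hee).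
  by rewrite hp mulr1z mulrN1z mulrNz mul1r mulN1r -pmulrn; lra.
- have hc1 : (#|up_covers p| <= 1)%N by rewrite leqNgt.
  have : ~~ maximal p by apply: contra pnA => mx; apply: hmp; rewrite mx orbT.
  move=> /forallPn [q0]; rewrite negbK => pq0.
  case: (@min_ex _ _ (fun q => (p < q)%O) q0 pq0) => c pc cmin.
  have covc : forall c', (p < c')%O -> (forall r, (p < r)%O -> ~~ (r < c')%O) ->
      c' \in up_covers p.
    move=> c' pc' hmin; rewrite inE /covers pc'; apply/forallP => r.
    by apply/negP => /andP[pr rc']; move: (hmin r pr); rewrite rc'.
  have cU : c \in up_covers p by apply: covc.
  have hc : forall a, (p < a)%O -> (c <= a)%O.
    move=> a pa.
    case: (@min_ex _ _ (fun r => (p < r)%O && (r <= a)%O) a); first by rewrite pa lexx.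
    move=> c' /andP[pc' c'a] c'min.
    have c'U : c' \in up_covers p.
      apply: covc => // r pr; apply/negP => rc'.
      by move: (c'min r); rewrite pr (le_trans (ltW rc') c'a) rc' => /(_ isT).
    case: (eqVneq c c') => [->//|cc'].
    have sub : [set c; c'] \subset up_covers p.
      by apply/subsetP => r; rewrite in_set2 => /orP[/eqP->|/eqP->].
    have := subset_leq_card sub; rewrite cards2 cc' => h2.
    by move: hcard; rewrite h2.
  have cnp : c != p by apply: contraTneq pc => ->; rewrite ltxx.
  case: (boolP (c \in A)) => cA.
  + have Pc : (c \in A) && (c <= c)%O by rewrite cA lexx.
    case: (@arg_minnP _ c (fun a => (a \in A) && (c <= a)%O) (fun a => lam a) Pc).
    move=> ast /andP[astA cast] amin.
    apply: (@flip_ue_gen (-1) 0 (lam ast)%:Z set0) => //.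
    * by move=> r; rewrite inE.
    * by rewrite inE.
    move=> e e' heA hee hp.
    apply: (caseA2 cA pc hc astA cast _ heA hee).
      by move=> a aA ca; apply: amin; rewrite aA ca.
    by rewrite hp mulrN1z mul0r addr0 -pmulrn; lra.
  + have cW : c \in W1.
      have := nA12 cA; rewrite (negbTE (abv pc)) orbF //.
    apply: (@flip_ue_gen (-1) 1 0 [set c]) => //.
    * by move=> r; rewrite inE => /eqP->.
    * by rewrite inE eq_sym.
    move=> e e' heA hee hp.
    apply: (caseA1 cW pc hc heA hee).
    by rewrite hp big_set1 mulrN1z mulr1z mulN1r mul1r addr0; lra.
Qed.

End Flip.

Section Main.
Variables (R : realType) (d : Order.disp_t) (T : finPOrderType d).
Variables (A : {set T}) (lam : T -> nat).
Hypothesis hmp : marked_poset A.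
Local Open Scope ring_scope.
Notation UE := (@unimodular_equiv R d T A).
Notation Q W := (chain_order_polytope (R := R) lam W (~: A :\: W)).
Notation adm W := (admissible W (~: A :\: W)).

Lemma flip_Q (W : {set T}) p : W \subset ~: A -> adm W -> p \in W ->
  (forall q, (q < p)%O -> q \notin W) -> ~ star_elem p -> UE (Q W) (Q (W :\ p)).
Proof.
move=> WA hadm pW hbel nst.
have hdis : [disjoint W & ~: A :\: W].
  by rewrite disjoints_subset; apply/subsetP => r rW; rewrite !inE rW.
have hun : W :|: (~: A :\: W) = ~: A.
  apply/setP => r; rewrite !inE; case: (boolP (r \in W)) => rW //=.
  by move: (subsetP WA r rW); rewrite inE.
have hW1A : forall q, q \in W -> q \notin A by move=> q /(subsetP WA); rewrite inE.
have E : p |: (~: A :\: W) = ~: A :\: (W :\ p).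
  apply/setP => r; rewrite !inE; case: (eqVneq r p) => [->|rp] //=.
  by rewrite (hW1A p pW).
have := flip_step R lam hmp hdis hun hadm pW hbel hW1A nst.
by rewrite E.
Qed.

Section Down.
Variable V1 : {set T}.
Hypotheses (hV1 : V1 \subset ~: A) (hVadm : adm V1).

Lemma down n (W : {set T}) : #|W :\: V1| = n -> W \subset ~: A -> adm W ->
  (forall p, p \in W :\: V1 -> ~ star_elem p) -> UE (Q W) (Q (W :&: V1)).
Proof.
elim: n W => [|n IH] W hn WA hadm hst.
  have WV : W \subset V1.
    by move: hn => /eqP; rewrite cards_eq0 setD_eq0.
  by rewrite (setIidPl WV); apply: ue_refl.
have : W :\: V1 != set0 by rewrite -card_gt0 hn.
case/set0Pn => p0 p0D.
case: (@min_ex _ _ (fun q => q \in W :\: V1) p0 p0D) => p pD pmin.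
have pW : p \in W by move: pD; rewrite inE => /andP[].
have pV : p \notin V1 by move: pD; rewrite inE => /andP[].
have pA : p \notin A by move: (subsetP WA p pW); rewrite inE.
have hbel : forall q, (q < p)%O -> q \notin W.
  move=> q qp; apply/negP => qW.
  case: (boolP (q \in V1)) => qV.
    by apply: (hVadm qV _ qp); rewrite !inE pA pV.
  by move: (pmin q); rewrite inE qV qW qp => /(_ isT).
have h1 := flip_Q WA hadm pW hbel (hst p pD).
apply: ue_trans h1 _.
have -> : W :&: V1 = (W :\ p) :&: V1.
  apply/setP => r; rewrite !inE; case: (eqVneq r p) => [->|] //=.
  by rewrite (negbTE pV) andbF.
apply: IH.
- apply/eqP; rewrite -eqSS -hn (cardsD1 p (W :\: V1)) pD /=.
  apply/eqP; congr (_.+1); apply: eq_card => r; rewrite !inE.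
  by case: (r != p); case: (r \in V1).
- by apply: subset_trans WA; apply: subD1set.
- move=> u1 u2; rewrite !inE => /andP[u1p u1W] /andP[hu2 u2A] u12.
  case: (eqVneq u2 p) => [e|u2p].
    by subst u2; move: (hbel u1 u12); rewrite u1W.
  by apply: (hadm u1 u2 u1W _ u12); rewrite !inE u2A andbT; move: hu2; rewrite u2p.
- by move=> q; rewrite !inE => /andP[qV /andP[_ qW]]; apply: hst; rewrite inE qV qW.
Qed.
End Down.

Lemma decompE (U1 U2 : {set T}) : decomposition A U1 U2 ->
  U1 \subset ~: A /\ U2 = ~: A :\: U1.
Proof.
case=> hdis hun; split.
  by rewrite -hun; apply: subsetUl.
apply/setP => r; rewrite -hun !inE.
case: (boolP (r \in U1)) => rU /=.
  by rewrite (disjointFr hdis rU).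
by [].
Qed.

End Main.

Theorem theorem4p7 (R : realType) (d : Order.disp_t) (T : finPOrderType d)
    (A : {set T}) (lam : T -> nat) (U1 U2 V1 V2 : {set T}) :
  marked_poset A ->
  decomposition A U1 U2 -> admissible U1 U2 ->
  decomposition A V1 V2 -> admissible V1 V2 ->
  (U1, U2) <> (V1, V2) ->
  (forall p : T, star_elem p -> (p \in U1 <-> p \in V1)) ->
  unimodular_equiv (chain_order_polytope (R := R) (A := A) lam U1 U2)
                   (chain_order_polytope (R := R) (A := A) lam V1 V2).
Proof.
move=> hmp dU aU dV aV _ hst.
case: (decompE dU) => U1A U2E; case: (decompE dV) => V1A V2E.
subst U2 V2.
have h1 := @down R d T A lam hmp V1 aV _ U1 erefl U1A aU.
have h2 := @down R d T A lam hmp U1 aU _ V1 erefl V1A aV.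
apply: ue_trans (h1 _) _.
  by move=> p; rewrite inE => /andP[pV pU] /hst [/(_ pU)]; rewrite (negbTE pV).
rewrite setIC; apply: ue_sym; apply: h2.
by move=> p; rewrite inE => /andP[pU pV] /hst [_ /(_ pV)]; rewrite (negbTE pU).
Qed.
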